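(* Let $\Delta$ be a saturated sample set. There exists an effective procedure that produces, for any finite $\Delta$-diagram $\delta$ and any term variable $x$, an algorithmic description of a time warp $f$ that strongly extends $\delta_x$.
   Context: Time warps: $\overline{\omega}=\omega\cup\{\omega\}$ with its natural order; a time warp is a monotone $f\colon\overline\omega\to\overline\omega$ with $f(0)=0$, $f(\omega)=\bigvee_{n\in\omega}f(n)$; $\mathrm{last}(f):=\bigwedge\{p\in\overline\omega\mid f(p)=f(\omega)\}$. Basic terms: $t,u::=x\mid tu\mid t^{o}\mid t^{\ell}\mid t^{r}\mid\mathrm{id}\mid\bot$ ($x$ a term variable). Samples: $\alpha::=\kappa\mid t[\alpha]\mid\mathsf{s}(\alpha)\mid\mathsf{p}(\alpha)\mid\mathsf{last}(t)$ ($\kappa$ a time variable, $t$ a basic term). Relation $\leadsto$: $t[\alpha]\leadsto\alpha$; $\mathsf{s}(\alpha)\leadsto\alpha$; $\mathsf{p}(\alpha)\leadsto\alpha$; $(tu)[\alpha]\leadsto t[u[\alpha]]$; $t^{o}[\alpha]\leadsto t[\alpha]$; $t^{r}[\alpha]\leadsto t[t^{r}[\alpha]], t[\mathsf{s}(t^{r}[\alpha])]$; $t^{\ell}[\alpha]\leadsto t[t^{\ell}[\alpha]], t[\mathsf{p}(t^{\ell}[\alpha])]$; $t[\alpha]\leadsto t[\mathsf{last}(t)]$. A sample set is saturated if closed under $\leadsto$. For $p\in\overline\omega$: $p\ominus1=p-1$ if $p\in\omega\setminus\{0\}$, else $p$; $p\oplus1=p+1$ if $p\in\omega$, else $p$.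 For a saturated sample set $\Delta$, a $\Delta$-diagram is a map $\delta\colon\Delta\to\overline\omega$ such that (all samples mentioned belonging to $\Delta$): (S1) $\delta(\alpha)\le\delta(\beta)\Rightarrow\delta(t[\alpha])\le\delta(t[\beta])$; (S2) $\delta(\alpha)=0\Rightarrow\delta(t[\alpha])=0$; (S3) $\delta(\mathsf{p}(\alpha))=\delta(\alpha)\ominus1$; (S4) $\delta(\mathsf{s}(\alpha))=\delta(\alpha)\oplus1$; (S5) for $t[\alpha]\in\Delta$: $\delta(\mathsf{last}(t))\le\delta(\alpha)\iff\delta(t[\alpha])=\delta(t[\mathsf{last}(t)])$; (S6) $\delta(\mathsf{last}(t))=\omega\Rightarrow\delta(t[\mathsf{last}(t)])=\omega$; (L1) $\delta(\mathrm{id}[\alpha])=\delta(\alpha)$; (L2) if $\bot[\alpha]\in\Delta$ then $\delta(\mathsf{last}(\bot))=0$; (L3) $\delta((tu)[\alpha])=\delta(t[u[\alpha]])$; (L4) if $(tu)[\mathsf{last}(tu)]\in\Delta$ and $\delta(\mathsf{last}(tu))=\omega$ then $\delta(\mathsf{last}(t))=\delta(\mathsf{last}(u))=\omega$; (O1) $\delta(t^{o}[\alpha])\in\{0,\omega\}$; (O2) $\delta(\alpha)<\omega\Rightarrow(\delta(t^{o}[\alpha])=\omega\iff\delta(t[\alpha])=\omega)$; (O3) $\delta(\mathsf{last}(t^{o}))<\omega$; (O4) for $t[\alpha],t^{o}[\mathsf{last}(t^{o})]\in\Delta$: if $\delta(t^{o}[\mathsf{last}(t^{o})])<\omega$ and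 $\delta(\alpha)<\omega$ then $\delta(t[\alpha])<\omega$; (R1) $\delta(t[t^{r}[\alpha]])\le\delta(\alpha)$; (R2) for $t^{r}[\alpha]\in\Delta$: if $0<\delta(\alpha)<\omega$ and $\delta(t^{r}[\alpha])<\omega$ then $\delta(\alpha)<\delta(t[\mathsf{s}(t^{r}[\alpha])])$; (R3) for $t^{r}[\mathsf{last}(t^{r})]\in\Delta$: $\delta(\mathsf{last}(t^{r}))=\omega\Rightarrow\delta(\mathsf{last}(t))=\omega$; (R4) for $t^{r}[\mathsf{last}(t^{r})]\in\Delta$: $\delta(t^{r}[\mathsf{last}(t^{r})])<\omega\Rightarrow\delta(t[\mathsf{s}(t^{r}[\mathsf{last}(t^{r})])])=\omega$; (Λ1) for $t[t^{\ell}[\alpha]]\in\Delta$: $\delta(t^{\ell}[\alpha])<\omega\Rightarrow\delta(\alpha)\le\delta(t[t^{\ell}[\alpha]])$; (Λ2) for $t^{\ell}[\alpha]\in\Delta$: if $0<\delta(\alpha)<\omega$ and $\delta(t^{\ell}[\alpha])<\omega$ then $\delta(t[\mathsf{p}(t^{\ell}[\alpha])])<\delta(\alpha)$; (Λ3) for $t[t^{\ell}[\alpha]]\in\Delta$: if $\delta(\alpha)<\omega$ and $\delta(t^{\ell}[\alpha])=\omega$ then $\delta(t[t^{\ell}[\alpha]])<\delta(\alpha)$; (Λ4) for $t^{\ell}[\mathsf{last}(t^{\ell})]\in\Delta$: $\delta(\mathsf{last}(t^{\ell}))=\omega\Rightarrow\delta(\mathsf{last}(t))=\omega$; (Λ5)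 for $t^{\ell}[\mathsf{last}(t^{\ell})]\in\Delta$: $\delta(t^{\ell}[\mathsf{last}(t^{\ell})])<\omega\Rightarrow\delta(t[t^{\ell}[\mathsf{last}(t^{\ell})]])=\omega$. For a $\Delta$-diagram $\delta$ and basic term $t$, let $\delta_t:=\{(\delta(\alpha),\delta(t[\alpha]))\mid t[\alpha]\in\Delta\}$. A time warp $f$ extends $\delta_t$ if $f(i)=j$ for all $(i,j)\in\delta_t$, and strongly extends $\delta_t$ if moreover either $\delta_t=\emptyset$, or ($\delta_t\ne\emptyset$ and $\delta(\mathsf{last}(t))=\omega$ implies $\mathrm{last}(f)=\omega$). A diagram is finite if its domain $\Delta$ is finite. *)

(* Defs.v *)
From Stdlib Require Import Arith List.
Import ListNotations.

Inductive omb : Type := Fin (n : nat) | Om.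

Definition omb_le (a b : omb) : Prop :=
  match a, b with
  | Fin m, Fin n => m <= n
  | _, Om => True
  | Om, Fin _ => False
  end.

Definition omb_lt (a b : omb) : Prop := omb_le a b /\ a <> b.

Definition omb_pred (p : omb) : omb :=
  match p with Fin (S n) => Fin n | _ => p end.
Definition omb_succ (p : omb) : omb :=
  match p with Fin n => Fin (S n) | Om => Om end.

Definition is_lub (P : omb -> Prop) (v : omb) : Prop :=
  (forall a, P a -> omb_le a v) /\
  (forall u, (forall a, P a -> omb_le a u) -> omb_le v u).
Definition is_glb (P : omb -> Prop) (v : omb) : Prop :=
  (forall a, P a -> omb_le v a) /\
  (forall u, (forall a, P a -> omb_le u a) -> omb_le u v).

Definition time_warp (f : omb -> omb) : Prop :=
  (forall p q, omb_le p q -> omb_le (f p) (f q)) /\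
  f (Fin 0) = Fin 0 /\
  is_lub (fun a => exists n, a = f (Fin n)) (f Om).

Definition is_last (f : omb -> omb) (l : omb) : Prop :=
  is_glb (fun p => f p = f Om) l.

Inductive term : Type :=
| TVar (x : nat)
| TApp (t u : term)
| TO (t : term)
| TL (t : term)
| TR (t : term)
| TId
| TBot.

Inductive sample : Type :=
| SVar (k : nat)
| SAt (t : term) (a : sample)
| SS (a : sample)
| SP (a : sample)
| SLast (t : term).

Inductive leads : sample -> sample -> Prop :=
| ld_at t a : leads (SAt t a) a
| ld_s a : leads (SS a) a
| ld_p a : leads (SP a) a
| ld_app t u a : leads (SAt (TApp t u) a) (SAt t (SAt u a))
| ld_o t a : leads (SAt (TO t) a) (SAt t a)
| ld_r1 t a : leads (SAt (TR t) a) (SAt t (SAt (TR t) a))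
| ld_r2 t a : leads (SAt (TR t) a) (SAt t (SS (SAt (TR t) a)))
| ld_l1 t a : leads (SAt (TL t) a) (SAt t (SAt (TL t) a))
| ld_l2 t a : leads (SAt (TL t) a) (SAt t (SP (SAt (TL t) a)))
| ld_last t a : leads (SAt t a) (SAt t (SLast t)).

Definition saturated (D : sample -> Prop) : Prop :=
  forall a b, D a -> leads a b -> D b.


(* Delta-diagrams; delta is given as a total map, constrained only on D *)
Definition diagram (D : sample -> Prop) (d : sample -> omb) : Prop :=
  (forall t a b, D (SAt t a) -> D (SAt t b) ->
     omb_le (d a) (d b) -> omb_le (d (SAt t a)) (d (SAt t b))) /\
  (forall t a, D (SAt t a) -> d a = Fin 0 -> d (SAt t a) = Fin 0) /\
  (forall a, D (SP a) -> d (SP a) = omb_pred (d a)) /\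
  (forall a, D (SS a) -> d (SS a) = omb_succ (d a)) /\
  (forall t a, D (SAt t a) ->
     (omb_le (d (SLast t)) (d a) <-> d (SAt t a) = d (SAt t (SLast t)))) /\
  (forall t, D (SAt t (SLast t)) -> d (SLast t) = Om -> d (SAt t (SLast t)) = Om) /\
  (forall a, D (SAt TId a) -> d (SAt TId a) = d a) /\
  (forall a, D (SAt TBot a) -> d (SLast TBot) = Fin 0) /\
  (forall t u a, D (SAt (TApp t u) a) -> d (SAt (TApp t u) a) = d (SAt t (SAt u a))) /\
  (forall t u, D (SAt (TApp t u) (SLast (TApp t u))) ->
     d (SLast (TApp t u)) = Om -> d (SLast t) = Om /\ d (SLast u) = Om) /\
  (forall t a, D (SAt (TO t) a) -> d (SAt (TO t) a) = Fin 0 \/ d (SAt (TO t) a) = Om) /\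
  (forall t a, D (SAt (TO t) a) -> omb_lt (d a) Om ->
     (d (SAt (TO t) a) = Om <-> d (SAt t a) = Om)) /\
  (forall t, D (SLast (TO t)) -> omb_lt (d (SLast (TO t))) Om) /\
  (forall t a, D (SAt t a) -> D (SAt (TO t) (SLast (TO t))) ->
     omb_lt (d (SAt (TO t) (SLast (TO t)))) Om -> omb_lt (d a) Om ->
     omb_lt (d (SAt t a)) Om) /\
  (forall t a, D (SAt t (SAt (TR t) a)) -> omb_le (d (SAt t (SAt (TR t) a))) (d a)) /\
  (forall t a, D (SAt (TR t) a) -> omb_lt (Fin 0) (d a) -> omb_lt (d a) Om ->
     omb_lt (d (SAt (TR t) a)) Om ->
     omb_lt (d a) (d (SAt t (SS (SAt (TR t) a))))) /\
  (forall t, D (SAt (TR t) (SLast (TR t))) -> d (SLast (TR t)) = Om -> d (SLast t) = Om) /\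
  (forall t, D (SAt (TR t) (SLast (TR t))) ->
     omb_lt (d (SAt (TR t) (SLast (TR t)))) Om ->
     d (SAt t (SS (SAt (TR t) (SLast (TR t))))) = Om) /\
  (forall t a, D (SAt t (SAt (TL t) a)) -> omb_lt (d (SAt (TL t) a)) Om ->
     omb_le (d a) (d (SAt t (SAt (TL t) a)))) /\
  (forall t a, D (SAt (TL t) a) -> omb_lt (Fin 0) (d a) -> omb_lt (d a) Om ->
     omb_lt (d (SAt (TL t) a)) Om ->
     omb_lt (d (SAt t (SP (SAt (TL t) a)))) (d a)) /\
  (forall t a, D (SAt t (SAt (TL t) a)) -> omb_lt (d a) Om ->
     d (SAt (TL t) a) = Om -> omb_lt (d (SAt t (SAt (TL t) a))) (d a)) /\
  (forall t, D (SAt (TL t) (SLast (TL t))) -> d (SLast (TL t)) = Om -> d (SLast t) = Om) /\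
  (forall t, D (SAt (TL t) (SLast (TL t))) ->
     omb_lt (d (SAt (TL t) (SLast (TL t)))) Om ->
     d (SAt t (SAt (TL t) (SLast (TL t)))) = Om).

Definition extends (D : sample -> Prop) (d : sample -> omb) (t : term)
    (f : omb -> omb) : Prop :=
  forall a, D (SAt t a) -> f (d a) = d (SAt t a).

Definition delta_t_empty (D : sample -> Prop) (t : term) : Prop :=
  forall a, ~ D (SAt t a).

Definition strongly_extends (D : sample -> Prop) (d : sample -> omb) (t : term)
    (f : omb -> omb) : Prop :=
  extends D d t f /\
  (delta_t_empty D t \/
   (~ delta_t_empty D t ->
    d (SLast t) = Om -> forall l, is_last f l -> l = Om)).

(* Main.v *)
Require Import Defs.
From Stdlib Require Import List Arith Lia Bool.
Import ListNotations.

Definition oleb (a b : omb) : bool :=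
  match a, b with
  | Fin m, Fin n => Nat.leb m n
  | _, Om => true
  | Om, Fin _ => false
  end.

Lemma oleb_spec a b : oleb a b = true <-> omb_le a b.
Proof. destruct a, b; simpl; try apply Nat.leb_le; split; auto; congruence. Qed.

Definition omax (a b : omb) : omb :=
  match a, b with Fin m, Fin n => Fin (Nat.max m n) | _, _ => Om end.
Definition omin (a b : omb) : omb :=
  match a, b with
  | Fin m, Fin n => Fin (Nat.min m n)
  | Fin m, Om => Fin m
  | Om, y => y end.

Lemma ole_refl a : omb_le a a.
Proof. destruct a; simpl; auto. Qed.
Lemma ole_trans a b c : omb_le a b -> omb_le b c -> omb_le a c.
Proof. destruct a, b, c; simpl; intros; try lia; tauto. Qed.
Lemma ole_antisym a b : omb_le a b -> omb_le b a -> a = b.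
Proof. destruct a, b; simpl; intros; try tauto. f_equal; lia. Qed.
Lemma omax_mono a b a' b' : omb_le a a' -> omb_le b b' -> omb_le (omax a b) (omax a' b').
Proof. destruct a, b, a', b'; simpl; intros; try tauto; lia. Qed.
Lemma omin_mono a b a' b' : omb_le a a' -> omb_le b b' -> omb_le (omin a b) (omin a' b').
Proof. destruct a, b, a', b'; simpl; intros; try tauto; lia. Qed.
Lemma omax_l a b : omb_le a (omax a b).
Proof. destruct a, b; simpl; auto; lia. Qed.
Lemma omax_r a b : omb_le b (omax a b).
Proof. destruct a, b; simpl; auto; lia. Qed.
Lemma omax_lub a b c : omb_le a c -> omb_le b c -> omb_le (omax a b) c.
Proof. destruct a, b, c; simpl; intros; try tauto; lia. Qed.
Lemma omin_l a b : omb_le (omin a b) a.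
Proof. destruct a, b; simpl; auto; lia. Qed.

Definition g (P : list (omb * omb)) (p : omb) : omb :=
  fold_right (fun iv acc => if oleb (fst iv) p then omax (snd iv) acc else acc) (Fin 0) P.

Definition Mx (P : list (omb * omb)) : nat :=
  fold_right (fun iv acc => match fst iv with Fin k => Nat.max k acc | Om => acc end) 0 P.

Definition hasOm (P : list (omb * omb)) : bool :=
  existsb (fun iv => match fst iv with Om => true | _ => false end) P.

Definition cc P := if hasOm P then g P Om else Om.

Definition ff P (p : omb) : omb :=
  match p with
  | Fin n => omax (g P (Fin n)) (omin (cc P) (Fin (n - Mx P)))
  | Om => cc P
  end.

Lemma g_mono P p q : omb_le p q -> omb_le (g P p) (g P q).
Proof.
  intro H; induction P as [|[i v] P IH]; simpl; [lia|].
  destruct (oleb i p) eqn:E1.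
  - assert (E2: oleb i q = true) by (apply oleb_spec; apply oleb_spec in E1; eapply ole_trans; eauto).
    rewrite E2. apply omax_mono; auto using ole_refl.
  - destruct (oleb i q); auto. eapply ole_trans; [exact IH| apply omax_r].
Qed.

Lemma g_ge P p i v : In (i, v) P -> omb_le i p -> omb_le v (g P p).
Proof.
  induction P as [|[i' v'] P IH]; simpl; [tauto|]. intros [E|E] Hi.
  - inversion E; subst. apply oleb_spec in Hi. rewrite Hi. apply omax_l.
  - destruct (oleb i' p); auto. eapply ole_trans; [apply IH; auto| apply omax_r].
Qed.

Lemma g_le P p v : omb_le (Fin 0) v ->
  (forall i' v', In (i', v') P -> omb_le i' p -> omb_le v' v) -> omb_le (g P p) v.
Proof.
  intros H0 H; induction P as [|[i' v'] P IH]; simpl; auto.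
  destruct (oleb i' p) eqn:E.
  - apply omax_lub. apply (H i'); simpl; auto. apply oleb_spec; auto.
    apply IH; intros; eapply H; simpl; eauto.
  - apply IH; intros; eapply H; simpl; eauto.
Qed.

Lemma Mx_ge P n v : In (Fin n, v) P -> n <= Mx P.
Proof.
  induction P as [|[i' v'] P IH]; simpl; [tauto|]. intros [E|E].
  - inversion E; subst; simpl; lia.
  - specialize (IH E). destruct i'; simpl; lia.
Qed.

Lemma hasOm_spec P : hasOm P = true -> exists v, In (Om, v) P.
Proof.
  unfold hasOm. rewrite existsb_exists. intros [[i v] [H1 H2]]. simpl in H2.
  destruct i; try discriminate. eauto.
Qed.

Lemma hasOm_in P v : In (Om, v) P -> hasOm P = true.
Proof. intro H. unfold hasOm. apply existsb_exists. exists (Om, v). auto. Qed.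

Section Abs.
Variable P : list (omb * omb).
Hypothesis H1 : forall i v i' v', In (i, v) P -> In (i', v') P -> omb_le i i' -> omb_le v v'.
Hypothesis H2 : forall v, In (Fin 0, v) P -> v = Fin 0.

Lemma v_ge0 v : omb_le (Fin 0) v.
Proof. destruct v; simpl; auto; lia. Qed.

Lemma g_at i v : In (i, v) P -> g P i = v.
Proof.
  intro H. apply ole_antisym.
  - apply g_le. apply v_ge0. intros; eapply H1; eauto.
  - eapply g_ge; eauto using ole_refl.
Qed.

Lemma ff_ext i v : In (i, v) P -> ff P i = v.
Proof.
  intro H. destruct i as [n|]; simpl.
  - rewrite (g_at _ _ H). pose proof (Mx_ge _ _ _ H).
    replace (n - Mx P) with 0 by lia.
    destruct (cc P), v; simpl; auto; f_equal; lia.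
  - unfold cc. rewrite (hasOm_in _ _ H). apply g_at; auto.
Qed.

Lemma ff_mono p q : omb_le p q -> omb_le (ff P p) (ff P q).
Proof.
  destruct p as [n|], q as [m|]; simpl; intros; try tauto.
  - apply omax_mono. apply g_mono; simpl; auto. apply omin_mono. apply ole_refl. simpl; lia.
  - unfold cc. destruct (hasOm P).
    + apply omax_lub. apply g_mono; simpl; auto. eapply ole_trans. apply omin_l.
      apply ole_refl.
    + destruct (omax _ _); simpl; auto.
  - apply ole_refl.
Qed.

Lemma ff_tw : time_warp (ff P).
Proof.
  split; [exact ff_mono|split].
  - simpl. assert (g P (Fin 0) = Fin 0).
    { apply ole_antisym; [|apply v_ge0]. apply g_le. simpl; auto.
      intros i' v' Hi Hl. destruct i' as [[|k]|]; simpl in Hl; try lia; try tauto.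
      rewrite (H2 _ Hi). simpl; auto. }
    rewrite H. destruct (cc P); simpl; auto; f_equal; lia.
  - split.
    + intros a [n ->]. apply ff_mono. simpl; auto.
    + intros u Hu. destruct u as [k|]; [|change (omb_le (cc P) Om); destruct (cc P); simpl; auto].
      specialize (Hu (ff P (Fin (Mx P + S k))) (ex_intro _ _ eq_refl)).
      simpl in Hu. replace (Mx P + S k - Mx P) with (S k) in Hu by lia.
      pose proof (ole_trans _ _ _ (omax_r _ _) Hu).
      change (omb_le (cc P) (Fin k)). revert H. destruct (cc P); simpl; try tauto; lia.
Qed.

Hypothesis H3 : forall i v, In (i, v) P -> (i = Om <-> v = Om).

Lemma cc_om : cc P = Om.
Proof.
  unfold cc. destruct (hasOm P) eqn:E; auto.
  destruct (hasOm_spec _ E) as [v Hv]. rewrite (g_at _ _ Hv). apply H3 in Hv. tauto.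
Qed.

Lemma g_fin n : g P (Fin n) <> Om.
Proof.
  assert (forall Q, (forall i v, In (i, v) Q -> (i = Om <-> v = Om)) -> g Q (Fin n) <> Om).
  { induction Q as [|[i v] Q IH]; simpl; intros H; [discriminate|].
    destruct (oleb i (Fin n)) eqn:E.
    - assert (v <> Om). { intro e. apply (H i v) in e; auto. subst. discriminate. }
      assert (g Q (Fin n) <> Om) by (apply IH; eauto).
      destruct v, (g Q (Fin n)); simpl; congruence.
    - apply IH; eauto. }
  apply H; exact H3.
Qed.

Lemma ff_last l : is_last (ff P) l -> l = Om.
Proof.
  intros [_ Hl]. destruct l; auto. exfalso.
  specialize (Hl Om). simpl in Hl. apply Hl. intros a Ha.
  destruct a as [m|]; simpl; auto.
  change (omax (g P (Fin m)) (omin (cc P) (Fin (m - Mx P))) = cc P) in Ha. rewrite cc_om in Ha. simpl in Ha.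
  pose proof (g_fin m). destruct (g P (Fin m)); simpl in Ha; congruence.
Qed.
End Abs.

Fixpoint pairs (x : nat) (d : sample -> omb) (l : list sample) : list (omb * omb) :=
  match l with
  | [] => []
  | s :: l' =>
    match s with
    | SAt (TVar y) a => if Nat.eqb y x then (d a, d s) :: pairs x d l' else pairs x d l'
    | _ => pairs x d l'
    end
  end.

Lemma pairs_spec x d l i v :
  In (i, v) (pairs x d l) <->
  exists a, In (SAt (TVar x) a) l /\ i = d a /\ v = d (SAt (TVar x) a).
Proof.
  induction l as [|s l IH]; simpl.
  - split; [tauto|]. intros [a [[] _]].
  - destruct s as [k|t a|a|a|t]; try (rewrite IH; split; [intros [a' [E R]]; eauto
      | intros [a' [[E|E] R]]; [discriminate|eauto]]).
    destruct t; try (rewrite IH; split; [intros [a' [E R]]; eauto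
      | intros [a' [[E|E] R]]; [discriminate|eauto]]).
    destruct (Nat.eqb_spec x0 x).
    + subst. simpl. rewrite IH. split.
      * intros [E|[a' [E R]]]. inversion E; subst; eauto. eauto.
      * intros [a' [[E|E] R]]. inversion E; subst. left. destruct R as [-> ->]. auto.
        right; eauto.
    + rewrite IH; split; [intros [a' [E R]]; eauto
      | intros [a' [[E|E] R]]; [inversion E; congruence|eauto]].
Qed.

Theorem lemma3p16 :
  forall (Dl : list sample),
    saturated (fun a => In a Dl) ->
    forall (d : sample -> omb), diagram (fun a => In a Dl) d ->
    forall x : nat,
      { f : omb -> omb | time_warp f /\
          strongly_extends (fun a => In a Dl) d (TVar x) f }.
Proof.
  intros Dl Hsat d Hd x.
  destruct Hd as [S1 [S2 [_ [_ [S5 [S6 _]]]]]].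
  set (P := pairs x d Dl).
  assert (H1 : forall i v i' v', In (i, v) P -> In (i', v') P -> omb_le i i' -> omb_le v v').
  { intros i v i' v' A B L. apply pairs_spec in A, B.
    destruct A as [a [Ia [-> ->]]], B as [b [Ib [-> ->]]]. apply S1; auto. }
  assert (H2 : forall v, In (Fin 0, v) P -> v = Fin 0).
  { intros v A. apply pairs_spec in A. destruct A as [a [Ia [E ->]]]. apply S2; auto. }
  exists (ff P). split; [apply ff_tw; auto|]. split.
  - intros a Ia. apply ff_ext; auto. apply pairs_spec. eauto.
  - right. intros _ Hlast. apply ff_last; auto.
    intros i v A. apply pairs_spec in A. destruct A as [a [Ia [-> ->]]].
    assert (Il : In (SAt (TVar x) (SLast (TVar x))) Dl) by (eapply Hsat; eauto; constructor).
    pose proof (S6 _ Il Hlast) as E6.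
    pose proof (S5 _ _ Ia) as H5. rewrite Hlast, E6 in H5.
    destruct (d a); simpl in H5; split; intros HH; try tauto; try discriminate; apply H5; auto.
Qed.
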